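(* Under the hypotheses of the previous setting — $f\in C^2(0,\infty)$ with $f'>0$, $(u,m)$ a classical solution ($u\in C^3$, $m\in C^2$) of $-u_t+\frac12u_x^2=f(m)$, $m_t-(mu_x)_x=0$ in $\mathbb R\times(0,T)$ with $m>0$ and $u_x$ of at most linear growth, $m_0=m(\cdot,0)$, and $\gamma$ the solution of $\gamma_t(x,t)=-u_x(\gamma(x,t),t)$, $\gamma(x,0)=x$ — the function $v(x,t)=f(m(\gamma(x,t),t))$ satisfies $$-\Big(\frac{v_x}{\gamma_x}\Big)_x-\Big(\frac{\gamma_x^2}{m_0f'(m_0/\gamma_x)}v_t\Big)_t=0\qquad\text{in }\mathbb R\times(0,T).$$ In particular, if $f(m)=m^\theta$ ($\theta>0$), then $-\big(\frac{v_x}{\gamma_x}\big)_x-\big(\frac{\gamma_x}{\theta v}v_t\big)_t=0$, equivalently $-v_{tt}-\frac{\theta v}{\gamma_x^2}v_{xx}+v_x\frac{\theta v}{\gamma_x^3}\gamma_{xx}+\frac{\theta+1}{\theta}v^{-1}v_t^2=0$; and if $f(m)=\log m$, then $-\big(\frac{v_x}{\gamma_x}\big)_x-(\gamma_xv_t)_t=0$. *)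

(* Defs.v *)
From Stdlib Require Import Reals Lra.
From Coquelicot Require Import Coquelicot.
Open Scope R_scope.

(* Functions of (x,t) are curried: g : R -> R -> R, g x t. *)

Definition px (g : R -> R -> R) : R -> R -> R :=
  fun x t => Derive (fun y => g y t) x.
Definition pt (g : R -> R -> R) : R -> R -> R :=
  fun x t => Derive (fun s => g x s) t.

Definition open2 (U : R -> R -> Prop) : Prop :=
  forall x t, U x t -> exists eps : R, 0 < eps /\
    forall y s, Rabs (y - x) < eps -> Rabs (s - t) < eps -> U y s.

Definition cont2 (g : R -> R -> R) (x t : R) : Prop :=
  continuous (fun p : R * R => g (fst p) (snd p)) (x, t).

Fixpoint Ck (k : nat) (U : R -> R -> Prop) (g : R -> R -> R) : Prop :=
  match k with
  | O => forall x t, U x t -> cont2 g x t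
  | S k' =>
      (forall x t, U x t ->
         cont2 g x t /\ ex_derive (fun y => g y t) x /\ ex_derive (fun s => g x s) t)
      /\ Ck k' U (px g) /\ Ck k' U (pt g)
  end.

Definition C2_pos (f : R -> R) : Prop :=
  forall y, 0 < y ->
    continuous f y /\ ex_derive f y /\ continuous (Derive f) y /\
    ex_derive (Derive f) y /\ continuous (Derive (Derive f)) y.

Definition vfun (f : R -> R) (m gamma : R -> R -> R) : R -> R -> R :=
  fun x t => f (m (gamma x t) t).

Definition m0 (m : R -> R -> R) : R -> R := fun x => m x 0.

Definition flux_x (v gamma : R -> R -> R) : R -> R -> R :=
  fun x t => px v x t / px gamma x t.

Definition flux_t (f : R -> R) (m v gamma : R -> R -> R) : R -> R -> R :=
  fun x t => (px gamma x t) ^ 2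
             / (m0 m x * Derive f (m0 m x / px gamma x t)) * pt v x t.

(* Main.v *)
Require Import Defs.
From Stdlib Require Import Reals Lra.
From Coquelicot Require Import Coquelicot.
Open Scope R_scope.

Lemma Ck_S k U g : Ck (S k) U g -> Ck k U g.
Proof.
  revert g; induction k as [|k IH]; intros g H.
  - destruct H as [H _]; intros x t Hxt; apply (H x t Hxt).
  - destruct H as [H1 [H2 H3]]. split; [exact H1|split; apply IH; assumption].
Qed.

Lemma Ck_base k U g x t : Ck (S k) U g -> U x t ->
  cont2 g x t /\ ex_derive (fun y => g y t) x /\ ex_derive (fun s => g x s) t.
Proof. intros [H _] Hxt. apply H; auto. Qed.

Lemma Ck_cont k U g x t : Ck k U g -> U x t -> cont2 g x t.
Proof. destruct k; intros H Hxt. apply H; auto. apply (Ck_base k U g x t H Hxt). Qed.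

Lemma cont2_2d g x t : cont2 g x t -> continuity_2d_pt g x t.
Proof. intro H. apply continuity_2d_pt_filterlim. exact H. Qed.

Lemma cont_eps (h : R -> R) x : (forall eps : posreal, exists d : posreal,
   forall y, Rabs (y - x) < d -> Rabs (h y - h x) < eps) -> continuous h x.
Proof. intros H. apply filterlim_locally. intros eps. destruct (H eps) as [d Hd].
  exists d. intros y Hy. apply Hd. exact Hy. Qed.

Lemma eps_cont (h : R -> R) x : continuous h x -> forall eps : posreal, exists d : posreal,
   forall y, Rabs (y - x) < d -> Rabs (h y - h x) < eps.
Proof. intros H eps. unfold continuous in H. rewrite filterlim_locally in H. destruct (H eps) as [d Hd].
  exists d. intros y Hy. apply Hd. exact Hy. Qed.

Lemma cont2_x g x t : cont2 g x t -> continuous (fun y => g y t) x.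
Proof. intro H. apply cont_eps. intro eps. destruct (cont2_2d _ _ _ H eps) as [d Hd].
  exists d. intros y Hy. apply Hd; auto. rewrite Rminus_eq_0, Rabs_R0. apply cond_pos. Qed.

Lemma cont2_tr g x t : cont2 g x t -> continuity_2d_pt (fun a b => g b a) t x.
Proof. intros H eps. destruct (cont2_2d _ _ _ H eps) as [d Hd]. exists d.
  intros u v Hu Hv. apply Hd; auto. Qed.

Lemma diff2 U g x t : open2 U -> Ck 1 U g -> U x t ->
  differentiable_pt_lim g x t (px g x t) (pt g x t).
Proof.
  intros HU [Hg [Hx Ht]] Hxt eps.
  destruct (HU x t Hxt) as [e0 [He0 HUe]].
  assert (He2 : 0 < eps / 2) by (destruct eps; simpl; lra).
  destruct (cont2_2d _ _ _ (Hx x t Hxt) (mkposreal _ He2)) as [d1 Hd1].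
  destruct (cont2_2d _ _ _ (Ht x t Hxt) (mkposreal _ He2)) as [d2 Hd2].
  simpl in Hd1, Hd2.
  assert (Hd: 0 < Rmin e0 (Rmin d1 d2)).
  { destruct d1, d2; simpl. repeat apply Rmin_glb_lt; auto. }
  exists (mkposreal _ Hd). simpl. intros u v Hu Hv.
  assert (B1 := Rmin_l e0 (Rmin d1 d2)). assert (B2 := Rmin_r e0 (Rmin d1 d2)).
  assert (B3 := Rmin_l d1 d2). assert (B4 := Rmin_r d1 d2).
  destruct (MVT_cor4 (fun z => g z v) (fun z => px g z v) x (Rabs (u-x))) with (b := u)
    as [c [Hc1 Hc2]]; [|right; reflexivity|].
  { intros c Hc. assert (U c v) by (apply HUe; lra).
    destruct (Hg c v H) as [_ [Hex _]]. apply Derive_correct in Hex. exact Hex. }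
  destruct (MVT_cor4 (fun z => g x z) (fun z => pt g x z) t (Rabs (v-t))) with (b := v)
    as [c' [Hc1' Hc2']]; [|right; reflexivity|].
  { intros c0 Hc. assert (U x c0) by (apply HUe; [rewrite Rminus_eq_0, Rabs_R0|]; lra).
    destruct (Hg x c0 H) as [_ [_ Hex]]. apply Derive_correct in Hex. exact Hex. }
  simpl in Hc1, Hc1'.
  assert (E : g u v - g x t - (px g x t * (u - x) + pt g x t * (v - t)) =
     (px g c v - px g x t) * (u - x) + (pt g x c' - pt g x t) * (v - t)) by lra.
  rewrite E.
  assert (A1 : Rabs (px g c v - px g x t) < eps/2) by (apply Hd1; lra).
  assert (A2 : Rabs (pt g x c' - pt g x t) < eps/2).
  { apply Hd2; [rewrite Rminus_eq_0, Rabs_R0|]; lra. }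
  eapply Rle_trans; [apply Rabs_triang|]. rewrite !Rabs_mult.
  assert (M1 := Rmax_l (Rabs (u - x)) (Rabs (v - t))).
  assert (M2 := Rmax_r (Rabs (u - x)) (Rabs (v - t))).
  assert (P1 := Rabs_pos (u-x)). assert (P2 := Rabs_pos (v-t)).
  assert (Rabs (px g c v - px g x t) * Rabs (u - x) <= eps/2 * Rmax (Rabs (u - x)) (Rabs (v - t))).
  { apply Rmult_le_compat; try apply Rabs_pos; lra. }
  assert (Rabs (pt g x c' - pt g x t) * Rabs (v - t) <= eps/2 * Rmax (Rabs (u - x)) (Rabs (v - t))).
  { apply Rmult_le_compat; try apply Rabs_pos; lra. }
  lra.
Qed.

Lemma chain_t U (g : R -> R -> R) (a : R -> R) s da : open2 U -> Ck 1 U g -> U (a s) s ->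
  is_derive a s da ->
  is_derive (fun s' => g (a s') s') s (px g (a s) s * da + pt g (a s) s).
Proof.
  intros HU Hg Has Ha. apply is_derive_Reals.
  replace (px g (a s) s * da + pt g (a s) s) with (px g (a s) s * da + pt g (a s) s * 1) by ring.
  apply (derivable_pt_lim_comp_2d g a (fun s => s)).
  - apply diff2 with U; auto.
  - apply is_derive_Reals; auto.
  - apply derivable_pt_lim_id.
Qed.

Lemma schwarz_gen U g x t : open2 U -> Ck 2 U g -> U x t -> px (pt g) x t = pt (px g) x t.
Proof.
  intros HU Hg Hxt. destruct Hg as [Hb [Hpx Hpt]].
  destruct (HU x t Hxt) as [e [He HUe]].
  unfold px, pt. apply Schwarz.
  - exists (mkposreal e He). simpl. intros u v Hu Hv. assert (U u v) by auto.
    destruct (Hb u v H) as [_ [H1 H2]].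
    destruct (Ck_base 0 U _ u v Hpt H) as [_ [H3 _]].
    destruct (Ck_base 0 U _ u v Hpx H) as [_ [_ H4]].
    repeat split; auto.
  - apply cont2_2d. destruct Hpt as [_ [Hc _]]. apply Hc; auto.
  - apply cont2_2d. destruct Hpx as [_ [_ Hc]]. apply Hc; auto.
Qed.

Lemma between_abs a b c : Rmin a b <= c <= Rmax a b -> Rabs (c - a) <= Rabs (b - a).
Proof. unfold Rmin, Rmax; destruct (Rle_dec a b); intros; unfold Rabs;
  repeat destruct Rcase_abs; lra. Qed.

Lemma deriv_contpt (h : R -> R) dh y : is_derive h y dh -> continuity_pt h y.
Proof. intro H. apply continuity_pt_filterlim. apply (ex_derive_continuous (K := R_AbsRing) (V := R_NormedModule)). exists dh; exact H. Qed.

Lemma incr_of_deriv (h dh : R -> R) : (forall y, is_derive h y (dh y)) -> (forall y, 0 < dh y) ->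
  forall y1 y2, y1 < y2 -> h y1 < h y2.
Proof.
  intros Hd Hp y1 y2 Hy.
  destruct (MVT_gen h y1 y2 dh) as [c [_ Hc]].
  - intros; apply Hd.
  - intros; eapply deriv_contpt; apply Hd.
  - specialize (Hp c). assert (0 < dh c * (y2 - y1)) by (apply Rmult_lt_0_compat; lra). lra.
Qed.

Lemma inv_cont (F G g : R -> R) x0 : (forall y1 y2, y1 < y2 -> F y1 < F y2) ->
  (forall x, F (g x) = G x) -> continuous G x0 -> continuous g x0.
Proof.
  intros Hinc HFG HG. apply cont_eps. intro eps. set (y0 := g x0).
  assert (Hle : forall a b, a <= b -> F a <= F b).
  { intros a b [H|H]; [left; auto|subst; lra]. }
  assert (P1 := Hinc y0 (y0 + eps) ltac:(destruct eps; simpl; lra)).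
  assert (P2 := Hinc (y0 - eps) y0 ltac:(destruct eps; simpl; lra)).
  assert (Hd : 0 < Rmin (F (y0 + eps) - F y0) (F y0 - F (y0 - eps))).
  { apply Rmin_glb_lt; lra. }
  destruct (eps_cont G x0 HG (mkposreal _ Hd)) as [d Hd']. exists d. intros x Hx.
  specialize (Hd' x Hx). simpl in Hd'. rewrite <- !HFG in Hd'. fold y0 in Hd'.
  assert (M1 := Rmin_l (F (y0 + eps) - F y0) (F y0 - F (y0 - eps))).
  assert (M2 := Rmin_r (F (y0 + eps) - F y0) (F y0 - F (y0 - eps))).
  apply Rabs_def2 in Hd'. destruct Hd' as [Q1 Q2].
  apply Rabs_def1.
  - destruct (Rlt_dec (g x - y0) eps) as [?|n]; auto.
    assert (F (y0 + eps) <= F (g x)) by (apply Hle; lra). lra.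
  - destruct (Rlt_dec (- eps) (g x - y0)) as [?|n]; auto.
    assert (F (g x) <= F (y0 - eps)) by (apply Hle; lra). lra.
Qed.

Lemma inv_deriv (F dF G dG g : R -> R) x0 : (forall y, is_derive F y (dF y)) -> (forall y, 0 < dF y) ->
  (forall x, is_derive G x (dG x)) -> continuous dF (g x0) -> continuous dG x0 ->
  (forall x, F (g x) = G x) -> is_derive g x0 (dG x0 / dF (g x0)).
Proof.
  intros HF HFp HG HcF HcG HFG.
  assert (Hgc : continuous g x0).
  { apply inv_cont with F G; auto. apply (incr_of_deriv F dF); auto.
    apply (ex_derive_continuous (K := R_AbsRing) (V := R_NormedModule)). exists (dG x0); auto. }
  set (y0 := g x0).
  apply is_derive_Reals. intros eps Heps.
  assert (Hdiv : continuity_2d_pt (fun a b => a * / b) (dG x0) (dF y0)).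
  { apply continuity_2d_pt_mult. apply continuity_2d_pt_id1.
    apply continuity_2d_pt_inv. apply continuity_2d_pt_id2. specialize (HFp y0); lra. }
  destruct (Hdiv (mkposreal _ Heps)) as [eta Heta]. simpl in Heta.
  destruct (eps_cont dG x0 HcG eta) as [d1 Hd1].
  destruct (eps_cont dF y0 HcF eta) as [d2 Hd2].
  destruct (eps_cont g x0 Hgc d2) as [d3 Hd3].
  assert (Hd : 0 < Rmin d1 d3) by (destruct d1, d3; simpl; apply Rmin_glb_lt; auto).
  exists (mkposreal _ Hd). simpl. intros h Hh0 Hh.
  assert (B1 := Rmin_l d1 d3). assert (B2 := Rmin_r d1 d3).
  destruct (MVT_gen G x0 (x0 + h) dG) as [c1 [Hc1 E1]].
  { intros; apply HG. } { intros; eapply deriv_contpt; apply HG. }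
  destruct (MVT_gen F y0 (g (x0 + h)) dF) as [c2 [Hc2 E2]].
  { intros; apply HF. } { intros; eapply deriv_contpt; apply HF. }
  rewrite !HFG in E2. unfold y0 in E2. rewrite HFG in E2.
  apply between_abs in Hc1. apply between_abs in Hc2.
  replace (x0 + h - x0) with h in * by ring.
  assert (HdF2 := HFp c2).
  assert (Q : (g (x0 + h) - g x0) / h = dG c1 * / dF c2).
  { assert (g (x0 + h) - g x0 = dG c1 * h / dF c2).
    { fold y0. apply (Rmult_eq_reg_r (dF c2)); [|lra].
      field_simplify; [|lra]. rewrite <- E1, E2. fold y0. ring. }
    rewrite H. field. split; lra. }
  rewrite Q. apply Heta.
  - apply Hd1. lra.
  - apply Hd2. assert (Rabs (g (x0 + h) - y0) < d2) by (apply Hd3; replace (x0 + h - x0) with h by ring; lra).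
    lra.
Qed.

Lemma abs_RInt_gen (h : R -> R) a b M : (forall z, Rmin a b <= z <= Rmax a b -> Rabs (h z) <= M) ->
  ex_RInt h a b -> Rabs (RInt h a b) <= Rabs (b - a) * M.
Proof.
  intros HM Hex. destruct (Rle_dec a b) as [Hab|Hab].
  - rewrite (Rabs_right (b - a)) by lra. apply abs_RInt_le_const; auto.
    intros; apply HM; rewrite Rmin_left, Rmax_right; lra.
  - rewrite <- (opp_RInt_swap h b a) by (apply ex_RInt_swap; auto).
    change (opp (RInt h b a)) with (- RInt h b a). rewrite Rabs_Ropp.
    replace (Rabs (b - a)) with (a - b) by (rewrite (Rabs_left (b - a)); lra).
    apply abs_RInt_le_const; [lra| apply ex_RInt_swap; auto|].
    intros; apply HM; rewrite Rmin_right, Rmax_left; lra.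
Qed.

Ltac etaf := repeat match goal with |- context [fun x => ?g x] => change (fun x => g x) with g end.
Ltac rring := match goal with |- ?a = ?b => change (@eq R a b) end; etaf; field.

Lemma comp_der (F g : R -> R) x dF dg : is_derive F (g x) dF -> is_derive g x dg ->
  is_derive (fun y => F (g y)) x (dF * dg).
Proof.
  intros H1 H2. apply is_derive_Reals. apply is_derive_Reals in H1. apply is_derive_Reals in H2.
  exact (derivable_pt_lim_comp g F x dg dF H2 H1).
Qed.

Lemma der_quot (RR NN : R -> R) c t dR dN : is_derive RR t dR -> is_derive NN t dN -> NN t <> 0 ->
  is_derive (fun s => c * RR s / NN s) t (c * ((dR * NN t - RR t * dN) / (NN t) ^ 2)).
Proof.
  intros H1 H2 H3. auto_derive.
  - repeat split; auto; [exists dR|exists dN]; auto.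
  - etaf. rewrite (is_derive_unique _ _ _ H1), (is_derive_unique _ _ _ H2).
    match goal with |- ?a = ?b => change (@eq R a b) end. field; auto.
Qed.

Lemma der_prod3 (AA BB : R -> R) c t dA dB : is_derive AA t dA -> is_derive BB t dB ->
  is_derive (fun s => c * AA s * BB s) t (c * (dA * BB t + AA t * dB)).
Proof.
  intros H1 H2. auto_derive.
  - repeat split; [exists dA|exists dB]; auto.
  - etaf. rewrite (is_derive_unique _ _ _ H1), (is_derive_unique _ _ _ H2).
    match goal with |- ?a = ?b => change (@eq R a b) end. ring.
Qed.

Lemma is_derive_eqv (F : R -> R) x l l' : is_derive F x l -> l = l' -> is_derive F x l'.
Proof. intros H E; subst; exact H. Qed.

Set Default Proof Using "All".

Section Main.
Variables (f : R -> R) (u m gamma : R -> R -> R) (T : R) (U : R -> R -> Prop).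
Hypotheses (HT : 0 < T) (Hf : C2_pos f) (Hf' : forall y, 0 < y -> 0 < Derive f y)
  (HU : open2 U) (HUdom : forall x t, 0 <= t < T -> U x t)
  (Hu : Ck 3 U u) (Hm : Ck 2 U m) (Hmpos : forall x t, 0 <= t < T -> 0 < m x t)
  (HHJ : forall x t, 0 < t < T -> - pt u x t + / 2 * (px u x t) ^ 2 = f (m x t))
  (HFP : forall x t, 0 < t < T -> pt m x t - px (fun y s => m y s * px u y s) x t = 0)
  (Hgrowth : exists C, forall x t, 0 < t < T -> Rabs (px u x t) <= C * (1 + Rabs x))
  (Hg0 : forall x, gamma x 0 = x)
  (Hgc : forall x, filterlim (fun s => gamma x s) (at_right 0) (locally x))
  (Hgode : forall x t, 0 < t < T -> is_derive (fun s => gamma x s) t (- px u (gamma x t) t)).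

Local Notation q := (px u).

Local Notation r := (px (px u)).

Lemma Cu2 : Ck 2 U u. Proof. apply Ck_S; exact Hu. Qed.
Lemma Cq2 : Ck 2 U q. Proof. exact (proj1 (proj2 Hu)). Qed.
Lemma Cq1 : Ck 1 U q. Proof. apply Ck_S; exact Cq2. Qed.
Lemma Cr1 : Ck 1 U r. Proof. exact (proj1 (proj2 Cq2)). Qed.
Lemma Cm1 : Ck 1 U m. Proof. apply Ck_S; exact Hm. Qed.
Lemma Cmx1 : Ck 1 U (px m). Proof. exact (proj1 (proj2 Hm)). Qed.
Lemma Cmt1 : Ck 1 U (pt m). Proof. exact (proj2 (proj2 Hm)). Qed.

Lemma Ut x t : 0 < t < T -> U x t. Proof. intros; apply HUdom; lra. Qed.

Lemma exdx (g : R -> R -> R) k x t : Ck (S k) U g -> 0 <= t < T -> ex_derive (fun y => g y t) x.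
Proof. intros H Ht. apply (Ck_base k U g x t H (HUdom x t Ht)). Qed.
Lemma exdt (g : R -> R -> R) k x t : Ck (S k) U g -> 0 <= t < T -> ex_derive (fun s => g x s) t.
Proof. intros H Ht. apply (Ck_base k U g x t H (HUdom x t Ht)). Qed.
Lemma contg (g : R -> R -> R) k x t : Ck k U g -> 0 <= t < T -> cont2 g x t.
Proof. intros H Ht. apply (Ck_cont k U g x t H (HUdom x t Ht)). Qed.

Lemma FPx y s : 0 < s < T -> pt m y s = px m y s * q y s + m y s * r y s.
Proof.
  intros Hs. assert (H := HFP y s Hs). unfold px at 1 in H.
  rewrite Derive_mult in H.
  - unfold px in *. lra.
  - apply (exdx m 1); [exact Hm|lra].
  - apply (exdx q 1); [exact Cq2|lra].
Qed.

Lemma HJxx y s : 0 < s < T ->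
  Derive (Derive f) (m y s) * (px m y s) ^ 2 + Derive f (m y s) * px (px m) y s
  + pt r y s - q y s * px r y s - (r y s) ^ 2 = 0.
Proof.
  intros Hs. assert (Hs' : 0 <= s < T) by lra.
  assert (E0 : forall z, - pt u z s + / 2 * (q z s) ^ 2 = f (m z s)) by (intros; apply HHJ; auto).
  assert (D1 : forall z, Derive (fun z => - pt u z s + / 2 * (q z s) ^ 2) z = - px (pt u) z s + q z s * r z s).
  { intro z. apply is_derive_unique. auto_derive.
    - split; [apply (exdx (pt u) 0); auto; exact (proj2 (proj2 Cu2))|].
      split; [apply (exdx q 1); auto; exact Cq2|auto].
    - unfold px, pt. rring. }
  assert (D2 : forall z, Derive (fun z => f (m z s)) z = Derive f (m z s) * px m z s).
  { intro z. apply is_derive_unique. auto_derive.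
    - split; [apply Hf, Hmpos; auto|]. split; [apply (exdx m 1); auto; exact Hm|auto].
    - unfold px. rring. }
  assert (D12 : forall z, - px (pt u) z s + q z s * r z s = Derive f (m z s) * px m z s).
  { intro z. rewrite <- D1, <- D2. apply Derive_ext. auto. }
  assert (S1 : forall z, px (pt u) z s = pt q z s).
  { intro z. apply (schwarz_gen U u z s HU Cu2 (HUdom z s Hs')). }
  assert (S2 : px (pt q) y s = pt r y s).
  { apply (schwarz_gen U q y s HU Cq2 (HUdom y s Hs')). }
  assert (D1' : Derive (fun z => - pt q z s + q z s * r z s) y = - pt r y s + r y s * r y s + q y s * px r y s).
  { apply is_derive_unique. auto_derive.
    - split; [apply (exdx (pt q) 0); auto; exact (proj2 (proj2 Cq2))|].
      split; [apply (exdx q 1); auto; exact Cq2|].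
      split; [apply (exdx r 0); auto; exact Cr1|auto].
    - rewrite <- S2. unfold px, pt. rring. }
  assert (D2' : Derive (fun z => Derive f (m z s) * px m z s) y =
     Derive (Derive f) (m y s) * (px m y s) ^ 2 + Derive f (m y s) * px (px m) y s).
  { apply is_derive_unique. auto_derive.
    - split; [apply Hf, Hmpos; auto|]. split; [apply (exdx m 1); auto; exact Hm|].
      split; [apply (exdx (px m) 0); auto; exact Cmx1|auto].
    - unfold px. rring. }
  assert (E : Derive (fun z => - pt q z s + q z s * r z s) y = Derive (fun z => Derive f (m z s) * px m z s) y).
  { apply Derive_ext. intro z. rewrite <- S1. apply D12. }
  rewrite D1', D2' in E. lra.
Qed.


Lemma ball_R (x e y : R) : ball x e y -> Rabs (y - x) < e.
Proof. intro H; exact H. Qed.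

Lemma exRInt_m s a b : 0 <= s < T -> ex_RInt (fun z => m z s) a b.
Proof. intros Hs. apply (ex_RInt_continuous (V := R_CompleteNormedModule)). intros z _. apply cont2_x. apply (contg m 2); auto. Qed.

Lemma cont_mx z s : 0 <= s < T -> continuous (fun y => m y s) z.
Proof. intros Hs. apply cont2_x. apply (contg m 2); auto. Qed.

Lemma loc_T s : 0 < s < T -> locally s (fun y => 0 < y < T).
Proof.
  intros Hs. assert (H0 : 0 < Rmin s (T - s)) by (apply Rmin_glb_lt; lra).
  exists (mkposreal _ H0). intros y Hy. apply ball_R in Hy. simpl in Hy.
  assert (M1 := Rmin_l s (T - s)). assert (M2 := Rmin_r s (T - s)).
  apply Rabs_def2 in Hy. lra.
Qed.

Lemma RInt_mt A B s : 0 < s < T -> RInt (fun z => pt m z s) A B = m B s * q B s - m A s * q A s.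
Proof.
  intros Hs.
  rewrite (RInt_ext _ (Derive (fun z => m z s * q z s))).
  2:{ intros z _. assert (H := HFP z s Hs). unfold px at 1 in H. lra. }
  rewrite RInt_Derive; [reflexivity| |].
  - intros z _. apply ex_derive_mult.
    + apply (exdx m 1); [exact Hm|lra].
    + apply (exdx q 1); [exact Cq2|lra].
  - intros z _. apply continuous_ext with (fun z => pt m z s).
    + intro y. assert (H := HFP y s Hs). unfold px at 1 in H. lra.
    + apply cont2_x. apply (contg (pt m) 1); [exact Cmt1|lra].
Qed.

Lemma Phi_deriv a b s : 0 < s < T ->
  is_derive (fun s' => RInt (fun z => m z s') (gamma a s') (gamma b s')) s 0.
Proof.
  intros Hs.
  assert (Hl := loc_T s Hs).
  assert (Hl2 : forall z, locally_2d (fun x' t => continuity_2d_pt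
        (fun u0 v => Derive (fun z0 => m v z0) u0) x' t) s z).
  { intros z. assert (H0 : 0 < Rmin s (T - s)) by (apply Rmin_glb_lt; lra).
    exists (mkposreal _ H0). simpl. intros x' t Hx' _.
    assert (M1 := Rmin_l s (T - s)). assert (M2 := Rmin_r s (T - s)).
    apply Rabs_def2 in Hx'.
    apply (cont2_tr (pt m)). apply (contg (pt m) 1); [exact Cmt1|lra]. }
  assert (H := is_derive_RInt_param_bound_comp (fun s z => m z s) (fun s => gamma a s)
     (fun s => gamma b s) s (- q (gamma a s) s) (- q (gamma b s) s)).
  simpl in H.
  assert (E : RInt (fun t => Derive (fun u0 => m t u0) s) (gamma a s) (gamma b s) +
      - m (gamma a s) s * - q (gamma a s) s + m (gamma b s) s * - q (gamma b s) s = 0).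
  { change (RInt (fun t => pt m t s) (gamma a s) (gamma b s) +
      - m (gamma a s) s * - q (gamma a s) s + m (gamma b s) s * - q (gamma b s) s = 0).
    rewrite RInt_mt by auto. ring. }
  rewrite E in H. apply H; clear H E.
  - apply filter_imp with (2 := Hl). intros y Hy. apply exRInt_m. lra.
  - exists (mkposreal 1 Rlt_0_1). apply filter_imp with (2 := Hl). intros y Hy. apply exRInt_m. lra.
  - exists (mkposreal 1 Rlt_0_1). apply filter_imp with (2 := Hl). intros y Hy. apply exRInt_m. lra.
  - apply Hgode; auto.
  - apply Hgode; auto.
  - exists (mkposreal 1 Rlt_0_1). apply filter_imp with (2 := Hl). intros y Hy t _.
    apply (exdt m 1); [exact Hm|lra].
  - intros t _. apply (cont2_tr (pt m)). apply (contg (pt m) 1); [exact Cmt1|lra].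
  - apply Hl2.
  - apply Hl2.
  - apply continuity_pt_filterlim. apply cont_mx. lra.
  - apply continuity_pt_filterlim. apply cont_mx. lra.
Qed.

Lemma Phi_const a b s1 s2 : 0 < s1 < T -> 0 < s2 < T ->
  RInt (fun z => m z s1) (gamma a s1) (gamma b s1) = RInt (fun z => m z s2) (gamma a s2) (gamma b s2).
Proof.
  intros H1 H2.
  destruct (MVT_gen (fun s' => RInt (fun z => m z s') (gamma a s') (gamma b s')) s1 s2 (fun _ => 0))
    as [c [Hc E]].
  - intros x Hx. apply Phi_deriv.
    assert (B1 := Rmin_l s1 s2). assert (B2 := Rmin_r s1 s2).
    assert (B3 := Rmax_l s1 s2). assert (B4 := Rmax_r s1 s2).
    assert (Rmin s1 s2 = s1 \/ Rmin s1 s2 = s2) by (unfold Rmin; destruct Rle_dec; auto).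
    assert (Rmax s1 s2 = s1 \/ Rmax s1 s2 = s2) by (unfold Rmax; destruct Rle_dec; auto).
    lra.
  - intros x Hx. eapply deriv_contpt. apply Phi_deriv.
    assert (Rmin s1 s2 = s1 \/ Rmin s1 s2 = s2) by (unfold Rmin; destruct Rle_dec; auto).
    assert (Rmax s1 s2 = s1 \/ Rmax s1 s2 = s2) by (unfold Rmax; destruct Rle_dec; auto).
    lra.
  - simpl in E. lra.
Qed.

Lemma Phi_lim a b t : 0 < t < T ->
  RInt (fun z => m z t) (gamma a t) (gamma b t) = RInt (m0 m) a b.
Proof.
  intros Ht.
  set (L := RInt (fun z => m z 0) a b). change (RInt (m0 m) a b) with L.
  set (P := RInt (fun z => m z t) (gamma a t) (gamma b t)).
  assert (Hall : forall eps, 0 < eps -> Rabs (P - L) <= 3 * eps).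
  2:{ destruct (Req_dec P L) as [?|Hne]; auto.
      assert (Hp : 0 < Rabs (P - L)) by (apply Rabs_pos_lt; lra).
      specialize (Hall (Rabs (P - L) / 6) ltac:(lra)). lra. }
  intros eps Heps.
  assert (H0 : 0 <= 0 < T) by lra.
  set (Ma := Rabs (m a 0) + 1). set (Mb := Rabs (m b 0) + 1).
  assert (HMa : 0 < Ma) by (unfold Ma; assert (Hp := Rabs_pos (m a 0)); lra).
  assert (HMb : 0 < Mb) by (unfold Mb; assert (Hp := Rabs_pos (m b 0)); lra).
  destruct (cont2_2d _ _ _ (contg m 2 a 0 Hm H0) (mkposreal 1 Rlt_0_1)) as [da Hda].
  destruct (cont2_2d _ _ _ (contg m 2 b 0 Hm H0) (mkposreal 1 Rlt_0_1)) as [db Hdb].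
  simpl in Hda, Hdb.
  assert (He1 : 0 < eps / (Rabs (b - a) + 1)).
  { apply Rdiv_lt_0_compat; auto. assert (Hp := Rabs_pos (b - a)); lra. }
  destruct (uniform_continuity_2d_1d m (Rmin a b) (Rmax a b) 0) with (eps := mkposreal _ He1)
    as [du Hdu].
  { intros z _. apply cont2_2d. apply (contg m 2); auto. }
  simpl in Hdu.
  assert (Hea : 0 < Rmin da (eps / Ma)) by (apply Rmin_glb_lt; [apply cond_pos|apply Rdiv_lt_0_compat; auto]).
  assert (Heb : 0 < Rmin db (eps / Mb)) by (apply Rmin_glb_lt; [apply cond_pos|apply Rdiv_lt_0_compat; auto]).
  assert (Ga := Hgc a). unfold filterlim, filter_le, filtermap in Ga.
  assert (Gb := Hgc b). unfold filterlim, filter_le, filtermap in Gb.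
  destruct (Ga (fun y => Rabs (y - a) < Rmin da (eps / Ma))) as [ga Hga].
  { exists (mkposreal _ Hea). intros y Hy. apply ball_R in Hy. exact Hy. }
  destruct (Gb (fun y => Rabs (y - b) < Rmin db (eps / Mb))) as [gb Hgb].
  { exists (mkposreal _ Heb). intros y Hy. apply ball_R in Hy. exact Hy. }
  set (s := Rmin (Rmin t (Rmin da db)) (Rmin du (Rmin ga gb)) / 2).
  assert (Hs0 : 0 < Rmin (Rmin t (Rmin da db)) (Rmin du (Rmin ga gb))).
  { destruct da, db, du, ga, gb; simpl. repeat apply Rmin_glb_lt; lra. }
  assert (R1 := Rmin_l (Rmin t (Rmin da db)) (Rmin du (Rmin ga gb))).
  assert (R2 := Rmin_r (Rmin t (Rmin da db)) (Rmin du (Rmin ga gb))).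
  assert (R3 := Rmin_l t (Rmin da db)). assert (R4 := Rmin_r t (Rmin da db)).
  assert (R5 := Rmin_l da db). assert (R6 := Rmin_r da db).
  assert (R7 := Rmin_l du (Rmin ga gb)). assert (R8 := Rmin_r du (Rmin ga gb)).
  assert (R9 := Rmin_l ga gb). assert (R10 := Rmin_r ga gb).
  assert (Hs : 0 < s < t) by (unfold s; lra).
  assert (Hsa : s < da) by (unfold s; lra). assert (Hsb : s < db) by (unfold s; lra).
  assert (Hsu : s < du) by (unfold s; lra).
  assert (Hs' : 0 <= s < T) by lra.
  assert (Hgas : Rabs (gamma a s - a) < Rmin da (eps / Ma)).
  { apply Hga; [|lra]. unfold ball; simpl; unfold AbsRing_ball, abs, minus, plus, opp; simpl.
    rewrite Ropp_0, Rplus_0_r, Rabs_right by lra. unfold s; lra. }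
  assert (Hgbs : Rabs (gamma b s - b) < Rmin db (eps / Mb)).
  { apply Hgb; [|lra]. unfold ball; simpl; unfold AbsRing_ball, abs, minus, plus, opp; simpl.
    rewrite Ropp_0, Rplus_0_r, Rabs_right by lra. unfold s; lra. }
  assert (Q1 := Rmin_l da (eps / Ma)). assert (Q2 := Rmin_r da (eps / Ma)).
  assert (Q3 := Rmin_l db (eps / Mb)). assert (Q4 := Rmin_r db (eps / Mb)).
  assert (EP : P = RInt (fun z => m z s) (gamma a s) (gamma b s)).
  { unfold P. apply Phi_const; lra. }
  assert (C1 : RInt (fun z => m z s) (gamma a s) (gamma b s) =
     RInt (fun z => m z s) (gamma a s) a + RInt (fun z => m z s) a (gamma b s)).
  { symmetry. apply (RInt_Chasles (V := R_CompleteNormedModule)); apply exRInt_m; auto. }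
  assert (C2 : RInt (fun z => m z s) a (gamma b s) =
     RInt (fun z => m z s) a b + RInt (fun z => m z s) b (gamma b s)).
  { symmetry. apply (RInt_Chasles (V := R_CompleteNormedModule)); apply exRInt_m; auto. }
  assert (C3 : RInt (fun z => m z s - m z 0) a b = RInt (fun z => m z s) a b - L).
  { unfold L. apply (RInt_minus (V := R_CompleteNormedModule)); apply exRInt_m; auto. }
  assert (Ba : Rabs (RInt (fun z => m z s) (gamma a s) a) <= eps).
  { eapply Rle_trans. apply abs_RInt_gen with (M := Ma).
    - intros z Hz. rewrite Rmin_comm, Rmax_comm in Hz. apply between_abs in Hz.
      assert (Rabs (m z s - m a 0) < 1).
      { apply Hda. lra.
        rewrite Rminus_0_r, Rabs_right; lra. }
      unfold Ma. assert (Hq := Rabs_triang (m z s - m a 0) (m a 0)).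
      replace (m z s - m a 0 + m a 0) with (m z s) in Hq by ring. lra.
    - apply exRInt_m; auto.
    - rewrite Rabs_minus_sym.
      apply Rle_trans with (eps / Ma * Ma).
      + apply Rmult_le_compat_r; lra.
      + right; field; lra. }
  assert (Bb : Rabs (RInt (fun z => m z s) b (gamma b s)) <= eps).
  { eapply Rle_trans. apply abs_RInt_gen with (M := Mb).
    - intros z Hz. apply between_abs in Hz.
      assert (Rabs (m z s - m b 0) < 1).
      { apply Hdb. lra. rewrite Rminus_0_r, Rabs_right; lra. }
      unfold Mb. assert (Hq := Rabs_triang (m z s - m b 0) (m b 0)).
      replace (m z s - m b 0 + m b 0) with (m z s) in Hq by ring. lra.
    - apply exRInt_m; auto.
    - apply Rle_trans with (eps / Mb * Mb).
      + apply Rmult_le_compat_r; lra.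
      + right; field; lra. }
  assert (Bm : Rabs (RInt (fun z => m z s - m z 0) a b) <= eps).
  { eapply Rle_trans. apply abs_RInt_gen with (M := eps / (Rabs (b - a) + 1)).
    - intros z Hz. left. apply (Hdu z 0 z s Hz); try lra.
      rewrite Rminus_eq_0, Rabs_R0. apply cond_pos.
    - apply (ex_RInt_minus (V := R_NormedModule)); apply exRInt_m; auto.
    - assert (Hp := Rabs_pos (b - a)).
      apply Rle_trans with ((Rabs (b - a) + 1) * (eps / (Rabs (b - a) + 1))).
      + apply Rmult_le_compat_r; lra.
      + right; field; lra. }
  rewrite EP, C1, C2.
  replace (RInt (fun z => m z s) (gamma a s) a + (RInt (fun z => m z s) a b + RInt (fun z => m z s) b (gamma b s)) - L)
    with (RInt (fun z => m z s) (gamma a s) a + RInt (fun z => m z s - m z 0) a b + RInt (fun z => m z s) b (gamma b s))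
    by (rewrite C3; ring).
  eapply Rle_trans. apply Rabs_triang.
  eapply Rle_trans. apply Rplus_le_compat_r. apply Rabs_triang.
  lra.
Qed.

Lemma gx_deriv x t : 0 < t < T -> is_derive (fun y => gamma y t) x (m x 0 / m (gamma x t) t).
Proof.
  intros Ht.
  change (is_derive (fun y => gamma y t) x (m0 m x / (fun y => m y t) ((fun y => gamma y t) x))).
  apply (inv_deriv (fun y => RInt (fun z => m z t) (gamma x t) y) (fun y => m y t)
    (fun y => RInt (m0 m) x y) (m0 m) (fun y => gamma y t) x).
  - intro y. apply (is_derive_RInt (V := R_CompleteNormedModule) (fun z => m z t) _ (gamma x t)).
    + apply filter_forall. intro b0. apply RInt_correct. apply exRInt_m; lra.
    + apply cont_mx; lra.
  - intros y. apply Hmpos; lra.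
  - intro y. apply (is_derive_RInt (V := R_CompleteNormedModule) (m0 m) _ x).
    + apply filter_forall. intro b0. apply RInt_correct. apply (exRInt_m 0); lra.
    + apply (cont_mx y 0); lra.
  - apply cont_mx; lra.
  - apply (cont_mx x 0); lra.
  - intro y. apply Phi_lim; auto.
Qed.

Lemma Npos x s : 0 < s < T -> 0 < m (gamma x s) s.
Proof. intros; apply Hmpos; lra. Qed.
Lemma m0pos x : 0 < m x 0.
Proof. apply Hmpos; lra. Qed.

Lemma pxg x t : 0 < t < T -> px gamma x t = m x 0 / m (gamma x t) t.
Proof. intros Ht. exact (is_derive_unique _ _ _ (gx_deriv x t Ht)). Qed.

Lemma compx (g : R -> R -> R) k x t : Ck (S k) U g -> 0 < t < T ->
  is_derive (fun y => g (gamma y t) t) x (px g (gamma x t) t * (m x 0 / m (gamma x t) t)).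
Proof.
  intros Hg Ht. apply (comp_der (fun y => g y t) (fun y => gamma y t)).
  - apply Derive_correct. apply (exdx g k); auto; lra.
  - apply gx_deriv; auto.
Qed.

Lemma compt (g : R -> R -> R) x t : Ck 1 U g -> 0 < t < T ->
  is_derive (fun s => g (gamma x s) s) t (px g (gamma x t) t * (- q (gamma x t) t) + pt g (gamma x t) t).
Proof.
  intros Hg Ht. apply chain_t with U; auto. apply Ut; auto.
Qed.

Lemma n_t x t : 0 < t < T ->
  is_derive (fun s => m (gamma x s) s) t (m (gamma x t) t * r (gamma x t) t).
Proof.
  intros Ht. assert (H := compt m x t Cm1 Ht). rewrite FPx in H by auto.
  replace (m (gamma x t) t * r (gamma x t) t) with
    (px m (gamma x t) t * - q (gamma x t) t + (px m (gamma x t) t * q (gamma x t) t + m (gamma x t) t * r (gamma x t) t)) by ring.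
  exact H.
Qed.

Lemma fder y : 0 < y -> is_derive f y (Derive f y).
Proof. intros; apply Derive_correct; apply Hf; auto. Qed.
Lemma f2der y : 0 < y -> is_derive (Derive f) y (Derive (Derive f) y).
Proof. intros; apply Derive_correct; apply Hf; auto. Qed.

Lemma v_x y t : 0 < t < T -> is_derive (fun z => f (m (gamma z t) t)) y
   (Derive f (m (gamma y t) t) * (px m (gamma y t) t * (m y 0 / m (gamma y t) t))).
Proof.
  intros Ht. apply (comp_der f (fun z => m (gamma z t) t)).
  - apply fder, Npos; auto.
  - apply (compx m 1); [exact Hm|auto].
Qed.

Lemma v_t x s : 0 < s < T -> is_derive (fun s' => f (m (gamma x s') s')) s
   (Derive f (m (gamma x s) s) * (m (gamma x s) s * r (gamma x s) s)).
Proof.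
  intros Hs. apply (comp_der f (fun s' => m (gamma x s') s')).
  - apply fder, Npos; auto.
  - apply n_t; auto.
Qed.

Lemma fluxx_eq y t : 0 < t < T ->
  flux_x (vfun f m gamma) gamma y t = Derive f (m (gamma y t) t) * px m (gamma y t) t.
Proof.
  intros Ht. unfold flux_x. rewrite pxg by auto.
  replace (px (vfun f m gamma) y t) with
    (Derive f (m (gamma y t) t) * (px m (gamma y t) t * (m y 0 / m (gamma y t) t)))
    by (symmetry; apply is_derive_unique; exact (v_x y t Ht)).
  assert (H1 := Npos y t Ht). assert (H2 := m0pos y). field. lra.
Qed.

Lemma A_der x t : 0 < t < T ->
  is_derive (fun y => Derive f (m (gamma y t) t) * px m (gamma y t) t) x
   (m x 0 / m (gamma x t) t * (Derive (Derive f) (m (gamma x t) t) * (px m (gamma x t) t) ^ 2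
      + Derive f (m (gamma x t) t) * px (px m) (gamma x t) t)).
Proof.
  intros Ht.
  assert (H1 : is_derive (fun y => Derive f (m (gamma y t) t)) x
     (Derive (Derive f) (m (gamma x t) t) * (px m (gamma x t) t * (m x 0 / m (gamma x t) t)))).
  { apply (comp_der (Derive f) (fun z => m (gamma z t) t)).
    - apply f2der, Npos; auto.
    - apply (compx m 1); [exact Hm|auto]. }
  assert (H2 := compx (px m) 0 x t Cmx1 Ht).
  assert (H3 := der_prod3 _ _ 1 x _ _ H1 H2).
  apply is_derive_ext with (f := fun y => 1 * Derive f (m (gamma y t) t) * px m (gamma y t) t).
  - intro y. match goal with |- ?a = ?b => change (@eq R a b) end. ring.
  - eapply is_derive_eqv; [exact H3|]. assert (HN := Npos x t Ht).
    match goal with |- ?a = ?b => change (@eq R a b) end. cbv beta. field. lra.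
Qed.

Lemma fluxt_eq x s : 0 < s < T ->
  flux_t f m (vfun f m gamma) gamma x s = m x 0 * r (gamma x s) s / m (gamma x s) s.
Proof.
  intros Hs. unfold flux_t, m0. rewrite pxg by auto.
  replace (pt (vfun f m gamma) x s) with
    (Derive f (m (gamma x s) s) * (m (gamma x s) s * r (gamma x s) s))
    by (symmetry; apply is_derive_unique; exact (v_t x s Hs)).
  assert (HN := Npos x s Hs). assert (H0 := m0pos x).
  replace (m x 0 / (m x 0 / m (gamma x s) s)) with (m (gamma x s) s) by (field; lra).
  assert (Hd := Hf' _ HN). field. lra.
Qed.

Lemma fluxt_der x t : 0 < t < T ->
  is_derive (fun s => m x 0 * r (gamma x s) s / m (gamma x s) s) t
   (m x 0 * (((px r (gamma x t) t * (- q (gamma x t) t) + pt r (gamma x t) t) * m (gamma x t) t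
      - r (gamma x t) t * (m (gamma x t) t * r (gamma x t) t)) / (m (gamma x t) t) ^ 2)).
Proof.
  intros Ht. apply (der_quot (fun s => r (gamma x s) s) (fun s => m (gamma x s) s)).
  - apply compt; auto. exact Cr1.
  - apply n_t; auto.
  - assert (HN := Npos x t Ht). lra.
Qed.

Lemma loc_fluxt x t : 0 < t < T -> locally t (fun s =>
   m x 0 * r (gamma x s) s / m (gamma x s) s = flux_t f m (vfun f m gamma) gamma x s).
Proof.
  intros Ht. apply filter_imp with (2 := loc_T t Ht). intros s Hs. symmetry. apply fluxt_eq; auto.
Qed.

Lemma DAx x t : 0 < t < T -> px (flux_x (vfun f m gamma) gamma) x t =
   m x 0 / m (gamma x t) t * (Derive (Derive f) (m (gamma x t) t) * (px m (gamma x t) t) ^ 2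
      + Derive f (m (gamma x t) t) * px (px m) (gamma x t) t).
Proof.
  intros Ht. unfold px at 1.
  rewrite (Derive_ext _ (fun y => Derive f (m (gamma y t) t) * px m (gamma y t) t)).
  - apply is_derive_unique. apply A_der; auto.
  - intro y. apply fluxx_eq; auto.
Qed.

Lemma DFt x t : 0 < t < T -> pt (flux_t f m (vfun f m gamma) gamma) x t =
   m x 0 * (((px r (gamma x t) t * (- q (gamma x t) t) + pt r (gamma x t) t) * m (gamma x t) t
      - r (gamma x t) t * (m (gamma x t) t * r (gamma x t) t)) / (m (gamma x t) t) ^ 2).
Proof.
  intros Ht. unfold pt at 1.
  transitivity (Derive (fun s => m x 0 * r (gamma x s) s / m (gamma x s) s) t).
  - symmetry. apply Derive_ext_loc. exact (loc_fluxt x t Ht).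
  - apply is_derive_unique. apply fluxt_der; auto.
Qed.

Lemma key_id x t (A B : R) : 0 < t < T ->
  A = m x 0 / m (gamma x t) t * (Derive (Derive f) (m (gamma x t) t) * (px m (gamma x t) t) ^ 2
      + Derive f (m (gamma x t) t) * px (px m) (gamma x t) t) ->
  B = m x 0 * (((px r (gamma x t) t * (- q (gamma x t) t) + pt r (gamma x t) t) * m (gamma x t) t
      - r (gamma x t) t * (m (gamma x t) t * r (gamma x t) t)) / (m (gamma x t) t) ^ 2) ->
  - A - B = 0.
Proof.
  intros Ht -> ->. assert (HN := Npos x t Ht). assert (HJ := HJxx (gamma x t) t Ht).
  replace (- (m x 0 / m (gamma x t) t * (Derive (Derive f) (m (gamma x t) t) * (px m (gamma x t) t) ^ 2
      + Derive f (m (gamma x t) t) * px (px m) (gamma x t) t)) -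
   m x 0 * (((px r (gamma x t) t * (- q (gamma x t) t) + pt r (gamma x t) t) * m (gamma x t) t
      - r (gamma x t) t * (m (gamma x t) t * r (gamma x t) t)) / (m (gamma x t) t) ^ 2))
   with (- (m x 0 / m (gamma x t) t) * (Derive (Derive f) (m (gamma x t) t) * (px m (gamma x t) t) ^ 2 + Derive f (m (gamma x t) t) * px (px m) (gamma x t) t
  + pt r (gamma x t) t - q (gamma x t) t * px r (gamma x t) t - (r (gamma x t) t) ^ 2)) by (field; lra).
  rewrite HJ. ring.
Qed.

Lemma general_part x t : 0 < t < T ->
  ex_derive (fun y => flux_x (vfun f m gamma) gamma y t) x /\
  ex_derive (fun s => flux_t f m (vfun f m gamma) gamma x s) t /\
  - px (flux_x (vfun f m gamma) gamma) x t - pt (flux_t f m (vfun f m gamma) gamma) x t = 0.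
Proof.
  intros Ht. split; [|split].
  - apply ex_derive_ext with (fun y => Derive f (m (gamma y t) t) * px m (gamma y t) t).
    + intro y. symmetry. apply fluxx_eq; auto.
    + eexists. apply A_der; auto.
  - apply ex_derive_ext_loc with (1 := loc_fluxt x t Ht). eexists. apply fluxt_der; auto.
  - apply (key_id x t); auto. apply DAx; auto. apply DFt; auto.
Qed.

Lemma loc_pos y : 0 < y -> locally y (fun z => 0 < z).
Proof. intros Hy. exists (mkposreal y Hy). intros z Hz. apply ball_R in Hz. simpl in Hz.
  apply Rabs_def2 in Hz. lra. Qed.

Lemma fpow th : (forall y, 0 < y -> f y = Rpower y th) -> forall y, 0 < y -> Derive f y * y = th * f y.
Proof.
  intros Hp y Hy.
  assert (E : Derive f y = th * Rpower y (th - 1)).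
  { rewrite (Derive_ext_loc f (fun z => Rpower z th)).
    - apply is_derive_unique. apply is_derive_Reals. apply derivable_pt_lim_power; auto.
    - apply filter_imp with (2 := loc_pos y Hy). intros z Hz. apply Hp; auto. }
  rewrite E, Hp by auto.
  assert (Q : Rpower y th = Rpower y (th - 1) * Rpower y 1) by (rewrite <- Rpower_plus; f_equal; ring).
  rewrite Rpower_1 in Q by auto. rewrite Q. ring.
Qed.

Lemma flog : (forall y, 0 < y -> f y = ln y) -> forall y, 0 < y -> Derive f y = / y.
Proof.
  intros Hp y Hy. rewrite (Derive_ext_loc f ln).
  - apply is_derive_unique. apply is_derive_Reals. apply derivable_pt_lim_ln; auto.
  - apply filter_imp with (2 := loc_pos y Hy). intros z Hz. apply Hp; auto.
Qed.

Lemma fpos th : (forall y, 0 < y -> f y = Rpower y th) -> forall y, 0 < y -> 0 < f y.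
Proof. intros Hp y Hy. rewrite Hp by auto. unfold Rpower. apply exp_pos. Qed.

Lemma pt_vt x s : 0 < s < T -> pt (vfun f m gamma) x s =
   Derive f (m (gamma x s) s) * (m (gamma x s) s * r (gamma x s) s).
Proof. intros Hs. apply is_derive_unique. exact (v_t x s Hs). Qed.

Lemma pt_via_loc (F : R -> R -> R) x t : 0 < t < T ->
  (forall s, 0 < s < T -> F x s = m x 0 * r (gamma x s) s / m (gamma x s) s) ->
  pt F x t = m x 0 * (((px r (gamma x t) t * (- q (gamma x t) t) + pt r (gamma x t) t) * m (gamma x t) t
      - r (gamma x t) t * (m (gamma x t) t * r (gamma x t) t)) / (m (gamma x t) t) ^ 2).
Proof.
  intros Ht HF. unfold pt at 1.
  transitivity (Derive (fun s => m x 0 * r (gamma x s) s / m (gamma x s) s) t).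
  - symmetry. apply Derive_ext_loc. apply filter_imp with (2 := loc_T t Ht).
    intros s Hs. symmetry. apply HF; auto.
  - apply is_derive_unique. apply fluxt_der; auto.
Qed.

Lemma theta_eq1 th : 0 < th -> (forall y, 0 < y -> f y = Rpower y th) -> forall x t, 0 < t < T ->
  - px (flux_x (vfun f m gamma) gamma) x t
  - pt (fun y s => px gamma y s / (th * vfun f m gamma y s) * pt (vfun f m gamma) y s) x t = 0.
Proof.
  intros Hth Hp x t Ht. apply (key_id x t); auto. apply DAx; auto.
  apply pt_via_loc; auto. intros s Hs.
  rewrite pxg, pt_vt by auto. unfold vfun.
  assert (HN := Npos x s Hs). assert (Hfp := fpos th Hp _ HN).
  assert (Hd := fpow th Hp _ HN).
  replace (Derive f (m (gamma x s) s) * (m (gamma x s) s * r (gamma x s) s)) with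
    (th * f (m (gamma x s) s) * r (gamma x s) s) by (rewrite <- Hd; ring).
  field. lra.
Qed.

Lemma log_eq : (forall y, 0 < y -> f y = ln y) -> forall x t, 0 < t < T ->
  - px (flux_x (vfun f m gamma) gamma) x t
  - pt (fun y s => px gamma y s * pt (vfun f m gamma) y s) x t = 0.
Proof.
  intros Hp x t Ht. apply (key_id x t); auto. apply DAx; auto.
  apply pt_via_loc; auto. intros s Hs.
  rewrite pxg, pt_vt by auto.
  assert (HN := Npos x s Hs). rewrite (flog Hp _ HN). field. lra.
Qed.

Lemma theta_eq2 th : 0 < th -> (forall y, 0 < y -> f y = Rpower y th) -> forall x t, 0 < t < T ->
      - pt (pt (vfun f m gamma)) x t
      - th * vfun f m gamma x t / (px gamma x t) ^ 2 * px (px (vfun f m gamma)) x t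
      + px (vfun f m gamma) x t * (th * vfun f m gamma x t / (px gamma x t) ^ 3) * px (px gamma) x t
      + (th + 1) / th * / vfun f m gamma x t * (pt (vfun f m gamma) x t) ^ 2 = 0.
Proof.
  intros Hth Hp x t Ht.
  assert (HN := Npos x t Ht). assert (Hfp := fpos th Hp _ HN). assert (H0 := m0pos x).
  assert (Hptpt : pt (pt (vfun f m gamma)) x t =
     th * (Derive f (m (gamma x t) t) * (m (gamma x t) t * r (gamma x t) t) * r (gamma x t) t
       + f (m (gamma x t) t) * (px r (gamma x t) t * (- q (gamma x t) t) + pt r (gamma x t) t))).
  { change (pt (pt (vfun f m gamma)) x t) with (Derive (fun s => pt (vfun f m gamma) x s) t).
    transitivity (Derive (fun s => th * f (m (gamma x s) s) * r (gamma x s) s) t).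
    - apply Derive_ext_loc. apply filter_imp with (2 := loc_T t Ht). intros s Hs.
      rewrite pt_vt by auto. assert (Hd := fpow th Hp _ (Npos x s Hs)).
      rewrite <- Hd. ring.
    - apply is_derive_unique.
      apply (der_prod3 (fun s => f (m (gamma x s) s)) (fun s => r (gamma x s) s) th t).
      + apply v_t; auto.
      + apply compt; auto. exact Cr1. }
  assert (Hexg : ex_derive (fun y => px gamma y t) x).
  { apply ex_derive_ext with (fun y => m y 0 / m (gamma y t) t).
    - intro y. symmetry. apply pxg; auto.
    - apply ex_derive_div.
      + apply (exdx m 1); [exact Hm|lra].
      + eexists. apply (compx m 1); [exact Hm|auto].
      + lra. }
  assert (Hpxx : px (px (vfun f m gamma)) x t =
     (m x 0 / m (gamma x t) t * (Derive (Derive f) (m (gamma x t) t) * (px m (gamma x t) t) ^ 2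
      + Derive f (m (gamma x t) t) * px (px m) (gamma x t) t)) * (m x 0 / m (gamma x t) t)
     + (Derive f (m (gamma x t) t) * px m (gamma x t) t) * px (px gamma) x t).
  { change (px (px (vfun f m gamma)) x t) with (Derive (fun y => px (vfun f m gamma) y t) x).
    rewrite (Derive_ext _ (fun y => (Derive f (m (gamma y t) t) * px m (gamma y t) t) * px gamma y t)).
    2:{ intro y. rewrite pxg by auto.
        replace (px (vfun f m gamma) y t) with
          (Derive f (m (gamma y t) t) * (px m (gamma y t) t * (m y 0 / m (gamma y t) t)))
          by (symmetry; apply is_derive_unique; exact (v_x y t Ht)). ring. }
    rewrite Derive_mult.
    - replace (Derive (fun y => Derive f (m (gamma y t) t) * px m (gamma y t) t) x) with
        (m x 0 / m (gamma x t) t * (Derive (Derive f) (m (gamma x t) t) * (px m (gamma x t) t) ^ 2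
         + Derive f (m (gamma x t) t) * px (px m) (gamma x t) t))
        by (symmetry; apply is_derive_unique; apply A_der; auto).
      rewrite pxg by auto. reflexivity.
    - eexists. apply A_der; auto.
    - exact Hexg. }
  assert (Hpx : px (vfun f m gamma) x t =
     Derive f (m (gamma x t) t) * (px m (gamma x t) t * (m x 0 / m (gamma x t) t))).
  { apply is_derive_unique. exact (v_x x t Ht). }
  rewrite Hptpt, Hpxx, Hpx, pt_vt, pxg by auto. unfold vfun.
  assert (Hd := fpow th Hp _ HN).
  assert (HJ := HJxx (gamma x t) t Ht).
  assert (Hd' : Derive f (m (gamma x t) t) = th * f (m (gamma x t) t) / m (gamma x t) t)
    by (apply (Rmult_eq_reg_r (m (gamma x t) t)); [rewrite Hd; field|]; lra).
  rewrite Hd'. rewrite Hd' in HJ.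
  transitivity (th * f (m (gamma x t) t) * (- (Derive (Derive f) (m (gamma x t) t) * px m (gamma x t) t ^ 2 +
       th * f (m (gamma x t) t) / m (gamma x t) t * px (px m) (gamma x t) t + pt r (gamma x t) t -
       q (gamma x t) t * px r (gamma x t) t - r (gamma x t) t ^ 2))).
  - field. repeat split; lra.
  - rewrite HJ. ring.
Qed.
End Main.

Theorem lemma3p5
  (f : R -> R) (u m gamma : R -> R -> R) (T : R) (U : R -> R -> Prop)
  (HT : 0 < T)
  (* f in C^2(0,oo), f' > 0 *)
  (Hf : C2_pos f)
  (Hf' : forall y, 0 < y -> 0 < Derive f y)
  (* classical solution: u in C^3, m in C^2 on an open set containing R x [0,T) *)
  (HU : open2 U)
  (HUdom : forall x t, 0 <= t < T -> U x t)
  (Hu : Ck 3 U u)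
  (Hm : Ck 2 U m)
  (Hmpos : forall x t, 0 <= t < T -> 0 < m x t)
  (* the MFG system in R x (0,T) *)
  (HHJ : forall x t, 0 < t < T ->
      - pt u x t + / 2 * (px u x t) ^ 2 = f (m x t))
  (HFP : forall x t, 0 < t < T ->
      pt m x t - px (fun y s => m y s * px u y s) x t = 0)
  (* u_x has at most linear growth *)
  (Hgrowth : exists C, forall x t, 0 < t < T -> Rabs (px u x t) <= C * (1 + Rabs x))
  (* gamma solves gamma_t = - u_x(gamma, t), gamma(x,0) = x *)
  (Hg0 : forall x, gamma x 0 = x)
  (Hgc : forall x, filterlim (fun s => gamma x s) (at_right 0) (locally x))
  (Hgode : forall x t, 0 < t < T ->
      is_derive (fun s => gamma x s) t (- px u (gamma x t) t)) :
  let v := vfun f m gamma in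
  (* general identity *)
  (forall x t, 0 < t < T ->
      ex_derive (fun y => flux_x v gamma y t) x /\
      ex_derive (fun s => flux_t f m v gamma x s) t /\
      - px (flux_x v gamma) x t - pt (flux_t f m v gamma) x t = 0)
  /\
  (* case f(m) = m^theta *)
  (forall theta, 0 < theta -> (forall y, 0 < y -> f y = Rpower y theta) ->
    forall x t, 0 < t < T ->
      - px (flux_x v gamma) x t
      - pt (fun y s => px gamma y s / (theta * v y s) * pt v y s) x t = 0 /\
      - pt (pt v) x t
      - theta * v x t / (px gamma x t) ^ 2 * px (px v) x t
      + px v x t * (theta * v x t / (px gamma x t) ^ 3) * px (px gamma) x t
      + (theta + 1) / theta * / v x t * (pt v x t) ^ 2 = 0)
  /\
  (* case f(m) = log m *)
  ((forall y, 0 < y -> f y = ln y) ->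
    forall x t, 0 < t < T ->
      - px (flux_x v gamma) x t
      - pt (fun y s => px gamma y s * pt v y s) x t = 0).
Proof.
  intros v. split; [|split].
  - intros x t Ht.
    exact (general_part f u m gamma T U HT Hf Hf' HU HUdom Hu Hm Hmpos HHJ HFP Hgrowth Hg0 Hgc Hgode x t Ht).
  - intros th Hth Hp x t Ht. split.
    + exact (theta_eq1 f u m gamma T U HT Hf Hf' HU HUdom Hu Hm Hmpos HHJ HFP Hgrowth Hg0 Hgc Hgode th Hth Hp x t Ht).
    + exact (theta_eq2 f u m gamma T U HT Hf Hf' HU HUdom Hu Hm Hmpos HHJ HFP Hgrowth Hg0 Hgc Hgode th Hth Hp x t Ht).
  - intros Hp x t Ht.
    exact (log_eq f u m gamma T U HT Hf Hf' HU HUdom Hu Hm Hmpos HHJ HFP Hgrowth Hg0 Hgc Hgode Hp x t Ht).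
Qed.
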